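(* Let $R \subseteq S$ be an extension of commutative rings such that $S$ is generated as an $R$-module by $1, f_1, \ldots, f_n$, where $n>0$ and $f_i \in S$. Suppose $S$ has a presentation as an $R$-module $$R^{\oplus q} \xrightarrow{\ \mathbb M\ } R^{\oplus(n+1)} \xrightarrow{\ \varepsilon\ } S \to 0$$ (exact), where $q>0$, $\mathbb M$ is an $(n+1)\times q$ matrix with entries in $R$, and $\varepsilon = [1\ f_1\ \cdots\ f_n]$, i.e. $\varepsilon(a_0,\ldots,a_n)^T = a_0 + a_1f_1+\cdots+a_nf_n$. Let $J$ be the ideal of $S$ generated by all entries of the first row of $\mathbb M$. Then the strict closure $R^*$ of $R$ in $S$ satisfies $R^* \subseteq R + J$.
   Context: For an extension of commutative rings $R \subseteq S$, the strict closure of $R$ in $S$ is $R^* = \{\alpha \in S \mid \alpha\otimes 1 = 1\otimes \alpha \text{ in } S\otimes_R S\}$. *)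

(* Defs.v *)
From HB Require Import structures.
From mathcomp Require Import all_boot all_order all_algebra.
Set Implicit Arguments. Unset Strict Implicit. Unset Printing Implicit Defensive.
Import Order.TTheory GRing.Theory Num.Theory.
Local Open Scope ring_scope.

(* The ring extension R ⊆ S is represented by S : comRingType together with a
   subring predicate Rp : {pred S}.  The tensor product S ⊗_R S is the quotient
   of the free abelian group Z[S × S] (formal finite Z-combinations, encoded as
   functions S -> S -> int) by the subgroup generated by the bilinearity and
   R-balancing relations.  [tens_rel Rp] is exactly that subgroup. *)

Definition delta (S : eqType) (x y : S) : S -> S -> int :=
  fun u v => ((u == x) && (v == y))%:Z.

Inductive tens_rel (S : comRingType) (Rp : {pred S}) : (S -> S -> int) -> Prop :=
| tr_addl (x y z : S) :
    tens_rel Rp (fun u v => delta (x + y) z u v - delta x z u v - delta y z u v)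
| tr_addr (x y z : S) :
    tens_rel Rp (fun u v => delta x (y + z) u v - delta x y u v - delta x z u v)
| tr_scal (r x y : S) : r \in Rp ->
    tens_rel Rp (fun u v => delta (r * x) y u v - delta x (r * y) u v)
| tr_zero : tens_rel Rp (fun _ _ => 0)
| tr_add f g : tens_rel Rp f -> tens_rel Rp g -> tens_rel Rp (fun u v => f u v + g u v)
| tr_opp f : tens_rel Rp f -> tens_rel Rp (fun u v => - f u v)
| tr_ext f g : (forall u v, f u v = g u v) -> tens_rel Rp f -> tens_rel Rp g.

(* alpha ⊗ 1 = 1 ⊗ alpha in S ⊗_R S *)
Definition in_strict_closure (S : comRingType) (Rp : {pred S}) (alpha : S) : Prop :=
  tens_rel Rp (fun u v => delta alpha 1 u v - delta 1 alpha u v).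

Definition eps (S : comRingType) (n : nat) (f : 'I_n -> S) (a : 'cV[S]_(n.+1)) : S :=
  a ord0 0 + \sum_(i < n) a (lift ord0 i) 0 * f i.

(* Main.v *)
Require Import Defs.
From HB Require Import structures.
From mathcomp Require Import all_boot all_order all_algebra.
From Stdlib Require Import ClassicalEpsilon.
From mathcomp Require Import ring.
Import GRing.Theory.
Local Open Scope ring_scope.

Section Aux.
Variable T : eqType.
Variable V : zmodType.

Lemma cov_sum (F : T -> V) (h : T -> int) (l1 l2 : seq T) :
  uniq l1 -> uniq l2 -> (forall p, h p != 0 -> p \in l1) ->
  (forall p, h p != 0 -> p \in l2) ->
  \sum_(p <- l1) F p *~ h p = \sum_(p <- l2) F p *~ h p.
Proof.
move=> u1 u2 c1 c2.
have Z : forall l, \sum_(p <- l | ~~ (h p != 0)) F p *~ h p = 0.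
  by move=> l; rewrite big1 // => p; rewrite negbK => /eqP ->.
rewrite (bigID (fun p => h p != 0)) /= Z.
rewrite [RHS](bigID (fun p => h p != 0)) /= Z.
rewrite !addr0 -big_filter -[RHS]big_filter; apply: perm_big.
apply: uniq_perm; rewrite ?filter_uniq // => p; rewrite !mem_filter.
by case: (boolP (h p != 0)) => //= /[dup] /c1 -> /c2 ->.
Qed.

Lemma sum_delta (F : T -> V) (l : seq T) (q : T) :
  uniq l -> q \in l -> \sum_(p <- l) F p *~ (p == q)%:Z = F q.
Proof.
elim: l => // a l IH /= /andP [al ul]; rewrite in_cons big_cons.
case: (eqVneq q a) => [qa _| nqa /= ql].
  subst a. rewrite (_ : F q *~ true = F q) // big1_seq ?addr0 // => p /andP [_ pl].
  by case: (eqVneq p q) => [pq|]; [rewrite pq in pl; rewrite pl in al| rewrite mulr0z].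
by rewrite ?eq_sym ?(negbTE nqa) mulr0z add0r IH.
Qed.
End Aux.

Theorem theorem2p6 (S : comRingType) (Rp : {pred S}) (n q : nat)
  (f : 'I_n -> S) (M : 'M[S]_(n.+1, q)) :
  GRing.subring_closed Rp ->
  (0 < n)%N -> (0 < q)%N ->
  (forall i j, M i j \in Rp) ->
  (* epsilon is surjective onto S *)
  (forall s : S, exists a : 'cV[S]_(n.+1), (forall i, a i 0 \in Rp) /\ eps f a = s) ->
  (* exactness at R^(n+1): ker epsilon = im M *)
  (forall a : 'cV[S]_(n.+1), (forall i, a i 0 \in Rp) ->
     (eps f a = 0 <-> exists b : 'cV[S]_q, (forall j, b j 0 \in Rp) /\ a = M *m b)) ->
  forall alpha : S, in_strict_closure Rp alpha ->
  exists r c, r \in Rp /\ alpha = r + \sum_(j < q) c j * M ord0 j.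
Proof.
move=> sRp _ _ MR hsurj hex alpha hal.
case: sRp => R1 RB RM.
have R0 : 0 \in Rp by rewrite -(subrr 1) RB.
have RD : forall x y, x \in Rp -> y \in Rp -> x + y \in Rp.
  by move=> x y hx hy; rewrite -[y]opprK -[- y]add0r RB // RB.
pose inJ (s : S) := exists c : 'I_q -> S, s = \sum_(j < q) c j * M ord0 j.
have J0 : inJ 0 by exists (fun _ => 0); rewrite big1 // => j _; rewrite mul0r.
have JD : forall s t, inJ s -> inJ t -> inJ (s + t).
  move=> s t [c ->] [d ->]; exists (fun j => c j + d j).
  by rewrite -big_split; apply: eq_bigr => j _; rewrite mulrDl.
have JN : forall s, inJ s -> inJ (- s).
  move=> s [c ->]; exists (fun j => - c j).
  by rewrite -sumrN; apply: eq_bigr => j _; rewrite mulNr.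
have JM : forall x s, inJ s -> inJ (x * s).
  move=> x s [c ->]; exists (fun j => x * c j).
  by rewrite mulr_sumr; apply: eq_bigr => j _; rewrite mulrA.
have JB : forall s t, inJ s -> inJ t -> inJ (s - t) by move=> s t hs ht; apply: JD => //; apply: JN.
have epsD : forall c d, eps f (c - d) = eps f c - eps f d.
  move=> c d; rewrite /eps !mxE.
  under eq_bigr do rewrite !mxE mulrBl.
  by rewrite sumrB; rewrite opprD addrACA.
have epsZ : forall r c, eps f (r *: c) = r * eps f c.
  move=> r c; rewrite /eps !mxE mulrDr mulr_sumr.
  by congr (_ + _); apply: eq_bigr => i _; rewrite !mxE mulrA.
have epsDD : forall c d, eps f (c + d) = eps f c + eps f d.
  move=> c d; rewrite /eps !mxE.
  under eq_bigr do rewrite !mxE mulrDl.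
  by rewrite big_split /= addrACA.
pose A s := proj1_sig (constructive_indefinite_description _ (hsurj s)).
have AR : forall s i, A s i 0 \in Rp by move=> s i; case: (proj2_sig (constructive_indefinite_description _ (hsurj s))).
have Ae : forall s, eps f (A s) = s by move=> s; case: (proj2_sig (constructive_indefinite_description _ (hsurj s))).
pose a0 s := A s ord0 0.
have K : forall (c : 'cV[S]_n.+1) v, (forall i, c i 0 \in Rp) -> eps f c = v -> inJ (c ord0 0 - a0 v).
  move=> c v cR cv.
  have := hex (c - A v); case.
    by move=> i; rewrite !mxE RB.
  move=> h _; case: h => [|b [_ hb]].
    by rewrite epsD cv Ae subrr.
  exists (fun j => b j 0); have -> : c ord0 0 - a0 v = (c - A v) ord0 0 by rewrite !mxE.
  rewrite hb !mxE; apply: eq_bigr => j _; by rewrite mulrC.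
pose phi (p : S * S) := p.1 * a0 p.2.
pose P (g : S -> S -> int) := exists l : seq (S * S), uniq l /\
  (forall p, g p.1 p.2 != 0 -> p \in l) /\ inJ (\sum_(p <- l) phi p *~ g p.1 p.2).
have dE : forall x y (p : S * S), delta x y p.1 p.2 = (p == (x, y))%:Z by [].
have gen3 : forall (p1 p2 p3 : S * S),
   inJ (phi p1 - phi p2 - phi p3) ->
   P (fun u v => delta p1.1 p1.2 u v - delta p2.1 p2.2 u v - delta p3.1 p3.2 u v).
  move=> p1 p2 p3 hJ; exists (undup [:: p1; p2; p3]); split; first exact: undup_uniq.
  split.
    move=> p; rewrite mem_undup !inE !dE -?surjective_pairing.
    by case: (p == p1); case: (p == p2); case: (p == p3).
  have U := undup_uniq [:: p1; p2; p3].
  have m : forall p, p \in [:: p1; p2; p3] -> p \in undup [:: p1; p2; p3] by move=> p; rewrite mem_undup.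
  under eq_bigr do rewrite !dE -?surjective_pairing !mulrzBr.
  rewrite !sumrB !sum_delta // ?m ?inE ?eqxx ?orbT //.
have gen2 : forall (p1 p2 : S * S),
   inJ (phi p1 - phi p2) ->
   P (fun u v => delta p1.1 p1.2 u v - delta p2.1 p2.2 u v).
  move=> p1 p2 hJ; exists (undup [:: p1; p2]); split; first exact: undup_uniq.
  split.
    move=> p; rewrite mem_undup !inE !dE -?surjective_pairing.
    by case: (p == p1); case: (p == p2).
  have U := undup_uniq [:: p1; p2].
  have m : forall p, p \in [:: p1; p2] -> p \in undup [:: p1; p2] by move=> p; rewrite mem_undup.
  under eq_bigr do rewrite !dE -?surjective_pairing !mulrzBr.
  rewrite !sumrB !sum_delta // ?m ?inE ?eqxx ?orbT //.
have HP : forall g, tens_rel Rp g -> P g.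
  move=> g; elim => {g}.
  - move=> x y z; apply: (gen3 (x + y, z) (x, z) (y, z)).
    by rewrite /phi /= mulrDl addrAC addrK subrr.
  - move=> x y z; apply: (gen3 (x, y + z) (x, y) (x, z)); rewrite /phi /=.
    rewrite -!mulrBr; apply: JM.
    have H : forall i, (A y + A z) i 0 \in Rp by move=> i; rewrite mxE RD.
    have E : eps f (A y + A z) = y + z by rewrite epsDD !Ae.
    have := K (A y + A z) (y + z) H E; rewrite /a0 mxE.
    by move=> /JN; rewrite opprB opprD addrA.
  - move=> r x y rR; apply: (gen2 (r * x, y) (x, r * y)); rewrite /phi /=.
    have H : forall i : 'I_n.+1, (r *: A y) i 0 \in Rp.
      by move=> i; rewrite mxE RM.
    have E : eps f (r *: A y) = r * y by rewrite epsZ Ae.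
    have := K _ _ H E; rewrite /a0 mxE => /(JM x).
    by rewrite mulrBr mulrA [x * r]mulrC.
  - by exists [::]; split=> //; split=> //; rewrite big_nil.
  - move=> g1 g2 _ [l1 [u1 [c1 J1]]] _ [l2 [u2 [c2 J2]]].
    exists (undup (l1 ++ l2)); split; first exact: undup_uniq.
    split.
      move=> p hp; rewrite mem_undup mem_cat.
      case: (eqVneq (g1 p.1 p.2) 0) => [e|/c1 -> //]; rewrite e add0r in hp.
      by rewrite c2 ?orbT.
    under eq_bigr do rewrite mulrzDr.
    rewrite big_split /=; apply: JD.
      rewrite -(@cov_sum _ _ phi (fun p => g1 p.1 p.2) _ _ u1) ?undup_uniq //.
      by move=> p /c1; rewrite mem_undup mem_cat => ->.
    rewrite -(@cov_sum _ _ phi (fun p => g2 p.1 p.2) _ _ u2) ?undup_uniq //.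
    by move=> p /c2; rewrite mem_undup mem_cat orbC => ->.
  - move=> g1 _ [l [u [c J]]]; exists l; split=> //; split.
      by move=> p; rewrite oppr_eq0; apply: c.
    under eq_bigr do rewrite mulrNz.
    by rewrite sumrN; apply: JN.
  - move=> g1 g2 e _ [l [u [c J]]]; exists l; split=> //; split.
      by move=> p; rewrite -e; apply: c.
    by under eq_bigr do rewrite -e.
have [l [u [c hJ]]] := HP _ hal.
have U := undup_uniq [:: (alpha, 1); (1, alpha)].
have m : forall p, p \in [:: (alpha, 1); (1, alpha)] -> p \in undup [:: (alpha, 1); (1, alpha)]
  by move=> p; rewrite mem_undup.
rewrite (@cov_sum _ _ phi (fun p => delta alpha 1 p.1 p.2 - delta 1 alpha p.1 p.2) _ _ u U) in hJ; last 2 first.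
- by move=> p /c.
- move=> p; rewrite mem_undup !inE !dE -?surjective_pairing.
  by case: (p == (alpha, 1)); case: (p == (1, alpha)).
move: hJ; under eq_bigr do rewrite !dE -?surjective_pairing !mulrzBr.
rewrite !sumrB !sum_delta ?m ?inE ?eqxx ?orbT // /phi /= => hJ.
have e0R : forall i : 'I_n.+1, (delta_mx ord0 0 : 'cV[S]_n.+1) i 0 \in Rp.
  by move=> i; rewrite mxE; case: (_ && _); rewrite ?R1 ?R0.
have e0 : eps f (delta_mx ord0 0) = 1.
  rewrite /eps mxE eqxx /= big1 ?addr0 // => i _.
  by rewrite mxE [lift _ _ == _]eq_sym (negbTE (neq_lift _ _)) mul0r.
have := K _ 1 e0R e0; rewrite mxE !eqxx /= => /(JM alpha) J1.
exists (a0 alpha), (proj1_sig (constructive_indefinite_description _ (JD _ _ J1 hJ))).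
split; first exact: AR.
rewrite -(proj2_sig (constructive_indefinite_description _ (JD _ _ J1 hJ))).
by ring.
Qed.
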